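(* Let $\psi,\varphi$ be CNF formulas neither of which contains a tautological clause. If $\psi\models\varphi$, then $\psi[x_\varepsilon]\models\varphi[x_\varepsilon]$ for every variable $x\in\mathrm{Vars}(\varphi)\cup\mathrm{Vars}(\psi)$.
   Context: A CNF formula is a finite set of clauses, each clause a finite set of literals; the empty clause is unsatisfiable and the empty CNF formula is true. A clause is tautological if it contains both $x$ and $\neg x$ for some variable $x$. For a CNF formula $\phi$ and a variable $x$, the deletion reduct $\phi[x_\varepsilon]$ is obtained from $\phi$ by deleting all occurrences of the literals $x$ and $\neg x$ from all clauses (clauses are kept, possibly becoming empty). $\models$ denotes classical propositional entailment. *)

(* Defs.v *)
From mathcomp Require Import all_boot.
Set Implicit Arguments. Unset Strict Implicit. Unset Printing Implicit Defensive.

(* A literal is a pair (v, b):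
   (v, true) is the positive literal v, (v, false) is the negative literal ~v.
   A clause is a finite collection of literals (a seq, read as a set);
   a CNF formula is a finite collection of clauses (a seq, read as a set). *)
Definition literal (V : eqType) := (V * bool)%type.
Definition clause (V : eqType) := seq (literal V).
Definition cnf (V : eqType) := seq (clause V).

Definition eval_lit (V : eqType) (a : V -> bool) (l : literal V) : bool :=
  if l.2 then a l.1 else ~~ a l.1.

Definition sat_clause (V : eqType) (a : V -> bool) (C : clause V) : bool :=
  has (eval_lit a) C.

Definition sat_cnf (V : eqType) (a : V -> bool) (phi : cnf V) : bool :=
  all (sat_clause a) phi.

Definition entails (V : eqType) (psi phi : cnf V) : Prop :=
  forall a : V -> bool, sat_cnf a psi -> sat_cnf a phi.

Definition tautological (V : eqType) (C : clause V) : Prop :=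
  exists x : V, (x, true) \in C /\ (x, false) \in C.

Definition no_taut (V : eqType) (phi : cnf V) : Prop :=
  forall C, C \in phi -> ~ tautological C.

Definition var_of (V : eqType) (x : V) (phi : cnf V) : Prop :=
  exists2 C, C \in phi & exists b, (x, b) \in C.

(* Deletion reduct phi[x_eps]: delete literals x and ~x from all clauses,
   keeping the clauses (possibly empty). *)
Definition del_reduct (V : eqType) (phi : cnf V) (x : V) : cnf V :=
  map (filter (fun l : literal V => l.1 != x)) phi.

(* Main.v *)
Require Import Defs.
From mathcomp Require Import all_boot.

Definition upd {V : eqType} (a : V -> bool) (x : V) (b : bool) :=
  fun v => if v == x then b else a v.

Lemma sat_filt_upd {V : eqType} (a : V -> bool) x b (C : clause V) :
  sat_clause (upd a x b) (filter (fun l : literal V => l.1 != x) C) =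
  sat_clause a (filter (fun l : literal V => l.1 != x) C).
Proof.
rewrite /sat_clause; apply: eq_in_has => l; rewrite mem_filter => /andP[hx _].
by rewrite /eval_lit /upd (negbTE hx).
Qed.

Lemma sat_filt_sub {V : eqType} (a : V -> bool) (P : pred (literal V)) (C : clause V) :
  sat_clause a (filter P C) -> sat_clause a C.
Proof.
rewrite /sat_clause => /hasP[l]; rewrite mem_filter => /andP[_ lC] h.
by apply/hasP; exists l.
Qed.

Theorem mainTheorem3 (V : eqType) (psi phi : cnf V) :
  no_taut psi -> no_taut phi -> entails psi phi ->
  forall x : V, var_of x phi \/ var_of x psi ->
    entails (del_reduct psi x) (del_reduct phi x).
Proof.
move=> _ ntphi ent x _ a sa.
have satb : forall b, sat_cnf (upd a x b) phi.
  move=> b; apply: ent; apply/allP => C CP.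
  apply: (@sat_filt_sub _ _ (fun l : literal V => l.1 != x)).
  rewrite sat_filt_upd.
  by move/allP: sa; apply; apply/mapP; exists C.
apply/allP => D' /mapP[D DP ->].
case E: (sat_clause a _) => //.
exfalso; apply: (ntphi D DP); exists x.
have key : forall b, exists l, l \in D /\ l.1 = x /\ eval_lit (upd a x b) l.
  move=> b; move/allP: (satb b) => /(_ D DP) /hasP[l lD hl].
  exists l; split => //; split => //.
  case: (eqVneq l.1 x) => // hne.
  move: E; rewrite -(sat_filt_upd a x b) /sat_clause.
  by have -> : has (eval_lit (upd a x b)) [seq l <- D | l.1 != x] by
    apply/hasP; exists l => //; rewrite mem_filter hne.
have [[v1 b1] [l1D [/= e1 h1]]] := key true.
have [[v0 b0] [l0D [/= e0 h0]]] := key false.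
subst v1 v0.
move: h1 h0; rewrite /eval_lit /upd /= eqxx.
case: b1 l1D => // l1D _; case: b0 l0D => // l0D _; by split.
Qed.
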